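(* Let $k>0$ be an integer and let $U_k$ be the random variable on $G(n,p)$ counting proper star $k$-separations. Then \[\mathbb E(U_k)=n\binom{n-1}{k}(1-p)^k\Big[\big(p+(1-p)^{k+1}\big)^{n-k-1}+\big(1-p^{n-k-1}\big)\big(1-(1-p)^{k(n-k-1)}\big)-1\Big].\]
   Context: $G(n,p)$ is the Erdős–Rényi random graph on vertex set $V$, $|V|=n$, each edge independently present with probability $p$. For a graph $\Delta$ with vertex set $W$, a separation is $S\subset W$ with $S\ne\varnothing$, $S\ne W$ and no edges between $S$ and $W\setminus S$. $\mathrm{st}(a)$ is $a$ with its neighbours. A star separation of $\Gamma$ is a pair $(a,S)$ with $a\in V$, $S\subset V\setminus\mathrm{st}(a)$, such that $S$ is a separation of the full subgraph $\Gamma\setminus\mathrm{st}(a)$; it is a star $k$-separation if $|S|=k$, and it is proper if $S$ is not a separation of $\Gamma$ itself. *)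

(* Defs.v *)
From mathcomp Require Import all_boot all_order all_algebra.
Set Implicit Arguments. Unset Strict Implicit. Unset Printing Implicit Defensive.
Import Order.TTheory GRing.Theory Num.Theory.

Definition pairs (n : nat) : {set {set 'I_n}} := [set e : {set 'I_n} | #|e| == 2].

(* A (simple) graph on 'I_n is an edge set E with E \subset pairs n. *)
Definition adj (n : nat) (E : {set {set 'I_n}}) (x y : 'I_n) : bool :=
  [set x; y] \in E.

Definition st (n : nat) (E : {set {set 'I_n}}) (a : 'I_n) : {set 'I_n} :=
  a |: [set y | adj E a y].

Definition is_sep (n : nat) (E : {set {set 'I_n}}) (W S : {set 'I_n}) : bool :=
  [&& S \subset W, S != set0, S != W &
      [forall x in S, forall y in W :\: S, ~~ adj E x y]].

Definition star_sep (n : nat) (E : {set {set 'I_n}}) (a : 'I_n) (S : {set 'I_n}) : bool :=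
  (S \subset ~: st E a) && is_sep E (~: st E a) S.

Definition U (n k : nat) (E : {set {set 'I_n}}) : nat :=
  #|[set aS : 'I_n * {set 'I_n} |
      [&& star_sep E aS.1 aS.2, #|aS.2| == k & ~~ is_sep E setT aS.2]]|.

Definition gnp_weight (R : ringType) (n : nat) (p : R) (E : {set {set 'I_n}}) : R :=
  (p ^+ #|E| * (1 - p) ^+ (#|pairs n| - #|E|))%R.

Definition gnp_expect (R : ringType) (n : nat) (p : R) (X : {set {set 'I_n}} -> nat) : R :=
  (\sum_(E : {set {set 'I_n}} | E \subset pairs n) gnp_weight p E * (X E)%:R)%R.

(* Main.v *)
Require Import Defs.
From mathcomp Require Import all_boot all_order all_algebra ring.
Set Implicit Arguments. Unset Strict Implicit. Unset Printing Implicit Defensive.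
Import Order.TTheory GRing.Theory Num.Theory.
Local Open Scope ring_scope.

Section Mu.
Variables (R : comNzRingType) (T : finType) (p : R).

Definition mu (X : {set T}) (F : {set T} -> R) : R :=
  \sum_(E : {set T} | E \subset X) p ^+ #|E| * (1 - p) ^+ #|X :\: E| * F E.

Lemma mu_ext (X : {set T}) (F G : {set T} -> R) : (forall E : {set T}, E \subset X -> F E = G E) -> mu X F = mu X G.
Proof. by move=> h; apply: eq_bigr => E hE; rewrite h. Qed.

Lemma muD (X : {set T}) (F G : {set T} -> R) : mu X (fun E => F E + G E) = mu X F + mu X G.
Proof. by rewrite /mu -big_split; apply: eq_bigr => E _; rewrite mulrDr. Qed.

Lemma muB (X : {set T}) (F G : {set T} -> R) : mu X (fun E => F E - G E) = mu X F - mu X G.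
Proof.
rewrite /mu -sumrB; apply: eq_bigr => E _; by rewrite mulrBr.
Qed.

Lemma muZl (X : {set T}) c (F : {set T} -> R) : mu X (fun E => c * F E) = c * mu X F.
Proof. by rewrite /mu mulr_sumr; apply: eq_bigr => E _; rewrite mulrCA. Qed.

Lemma muZr (X : {set T}) c (F : {set T} -> R) : mu X (fun E => F E * c) = mu X F * c.
Proof. by rewrite /mu mulr_suml; apply: eq_bigr => E _; rewrite mulrA. Qed.

Lemma mu_set0 (F : {set T} -> R) : mu set0 F = F set0.
Proof.
rewrite /mu (eq_bigl (fun E => E == set0)); last by move=> E; rewrite subset0.
by rewrite big_pred1_eq cards0 setD0 cards0 !expr0 !mul1r.
Qed.

Lemma mu_set1 x (F : {set T} -> R) : mu [set x] F = p * F [set x] + (1 - p) * F set0.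
Proof.
rewrite /mu (eq_bigl (fun E => E \in powerset [set x])); last first.
  by move=> E; rewrite powersetE.
rewrite powerset1 big_setU1 /=; last first.
  by rewrite in_set1 eq_sym; apply/eqP=> /setP /(_ x); rewrite !inE eqxx.
rewrite big_set1 setDv cards1 cards0 setD0 cards1 !expr0 expr1 !mulr1 mul1r.
by rewrite addrC.
Qed.


Lemma cardsU_disj (A B : {set T}) : A :&: B = set0 -> #|A :|: B| = (#|A| + #|B|)%N.
Proof. by move=> h; rewrite cardsU h cards0 subn0. Qed.

Lemma mu_split (Y Z : {set T}) (F : {set T} -> R) : Y :&: Z = set0 ->
  mu (Y :|: Z) F = mu Y (fun E1 => mu Z (fun E2 => F (E1 :|: E2))).
Proof.
move=> dYZ.
have dx : forall x, ~~ ((x \in Y) && (x \in Z)).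
  by move=> x; apply/negP => /andP [xY xZ]; move/setP: dYZ => /(_ x); rewrite !inE xY xZ.
transitivity (\sum_(E1 : {set T} | E1 \subset Y) \sum_(E2 : {set T} | E2 \subset Z)
   (p ^+ #|E1| * (1 - p) ^+ #|Y :\: E1|) * (p ^+ #|E2| * (1 - p) ^+ #|Z :\: E2|)
     * F (E1 :|: E2)); last first.
  apply: eq_bigr => E1 _; rewrite /mu big_distrr; apply: eq_bigr => E2 _.
  by rewrite /= !mulrA.
rewrite pair_big_dep /=.
rewrite /mu (reindex_onto (fun j : {set T} * {set T} => j.1 :|: j.2)
   (fun i => (i :&: Y, i :&: Z))) /=; last first.
  by move=> i hi; rewrite -setIUr; apply/setIidPl.
apply: eq_big => [[E1 E2]|[E1 E2]] /=.
  apply/andP/andP.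
    by move=> [_ /eqP [<- <-]]; rewrite !subsetIr.
  move=> [h1 h2]; split; first exact: setUSS.
  apply/eqP; congr pair; apply/setP => x; rewrite !inE;
  move: (introT implyP (subsetP h1 x)) (introT implyP (subsetP h2 x)) (dx x);
  by case: (x \in E1); case: (x \in E2); case: (x \in Y); case: (x \in Z).
move=> /andP [_ /eqP [e1 e2]].
have h1 : E1 \subset Y by rewrite -e1 subsetIr.
have h2 : E2 \subset Z by rewrite -e2 subsetIr.
have e12 : E1 :&: E2 = set0.
  apply/setP => x; rewrite !inE; move: (introT implyP (subsetP h1 x)) (introT implyP (subsetP h2 x)) (dx x).
  by case: (x \in E1); case: (x \in E2); case: (x \in Y); case: (x \in Z).
have eD : (Y :|: Z) :\: (E1 :|: E2) = (Y :\: E1) :|: (Z :\: E2).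
  apply/setP => x; rewrite !inE; move: (introT implyP (subsetP h1 x)) (introT implyP (subsetP h2 x)) (dx x).
  by case: (x \in E1); case: (x \in E2); case: (x \in Y); case: (x \in Z).
have eD0 : (Y :\: E1) :&: (Z :\: E2) = set0.
  apply/setP => x; rewrite !inE; move: (dx x).
  by case: (x \in E1); case: (x \in E2); case: (x \in Y); case: (x \in Z).
rewrite eD !cardsU_disj // !exprD; congr (_ * _).
by rewrite !mulrA; congr (_ * _); rewrite -!mulrA; congr (_ * _); rewrite mulrC.
Qed.


Lemma mu_const (X : {set T}) c : mu X (fun _ => c) = c.
Proof.
have h : forall m (X : {set T}), #|X| = m -> mu X (fun _ => c) = c.
  elim=> [|m IH] Y hY.
    by rewrite (cards0_eq hY) mu_set0.
  have : (0 < #|Y|)%N by rewrite hY.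
  move=> /card_gt0P [x xY].
  rewrite -(setD1K xY) mu_split; last first.
    by apply/setP => y; rewrite !inE; case: (y == x).
  rewrite (@mu_ext _ _ (fun _ => c)); last first.
    move=> E _; apply: IH; move: hY; rewrite (cardsD1 x Y) xY.
    by rewrite add1n => -[].
  by rewrite mu_set1 -mulrDl subrKC mul1r.
exact: h.
Qed.

Lemma mu_mul (Y Z : {set T}) (F G H : {set T} -> R) : Y :&: Z = set0 ->
  (forall E1 E2 : {set T}, E1 \subset Y -> E2 \subset Z -> F (E1 :|: E2) = G E1 * H E2) ->
  mu (Y :|: Z) F = mu Y G * mu Z H.
Proof.
move=> dYZ h; rewrite mu_split // -muZr; apply: mu_ext => E1 h1.
by rewrite -muZl; apply: mu_ext => E2 h2; rewrite h.
Qed.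

Definition local (B : {set T}) (f : {set T} -> R) := forall E, f E = f (E :&: B).

Lemma setUI_disj (Y Z E1 E2 : {set T}) : Y :&: Z = set0 -> E1 \subset Y -> E2 \subset Z ->
  (E1 :|: E2) :&: Y = E1 /\ (E1 :|: E2) :&: Z = E2.
Proof.
move=> dYZ h1 h2.
have dx : forall x, ~~ ((x \in Y) && (x \in Z)).
  by move=> x; apply/negP => /andP [xY xZ]; move/setP: dYZ => /(_ x); rewrite !inE xY xZ.
split; apply/setP => x; rewrite !inE;
move: (introT implyP (subsetP h1 x)) (introT implyP (subsetP h2 x)) (dx x);
by case: (x \in E1); case: (x \in E2); case: (x \in Y); case: (x \in Z).
Qed.

Lemma mu_mulI (Y Z : {set T}) (G H : {set T} -> R) : Y :&: Z = set0 ->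
  local Y G -> local Z H ->
  mu (Y :|: Z) (fun E => G E * H E) = mu Y G * mu Z H.
Proof.
move=> dYZ lG lH; apply: mu_mul => // E1 E2 h1 h2.
have [e1 e2] := setUI_disj dYZ h1 h2.
by rewrite lG lH e1 e2.
Qed.

Lemma mu_restrict (X Y : {set T}) (F : {set T} -> R) : Y \subset X -> local Y F ->
  mu X F = mu Y F.
Proof.
move=> hYX lF.
have eX : X = Y :|: (X :\: Y).
  apply/setP => x; rewrite !inE; move: (introT implyP (subsetP hYX x)).
  by case: (x \in X); case: (x \in Y).
rewrite eX (@mu_ext _ _ (fun E => F E * 1)); last by move=> E _; rewrite mulr1.
rewrite mu_mulI ?mu_const ?mulr1 //.
  by apply/setP => x; rewrite !inE; case: (x \in X); case: (x \in Y).
Qed.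

Lemma bigcup_seq_sub (I : eqType) (s : seq I) (B : I -> {set T}) j :
  j \in s -> B j \subset \bigcup_(i <- s) B i.
Proof.
elim: s => [//|i s IH]; rewrite in_cons big_cons => /orP [/eqP ->|js].
  exact: subsetUl.
exact: subset_trans (IH js) (subsetUr _ _).
Qed.

Lemma bigcup_seq_disj (I : eqType) (s : seq I) (B : I -> {set T}) j :
  (forall i, i \in s -> B j :&: B i = set0) -> B j :&: \bigcup_(i <- s) B i = set0.
Proof.
elim: s => [|i s IH] h; first by rewrite big_nil setI0.
rewrite big_cons setIUr h ?mem_head // IH ?set0U // => i' hi'.
by apply: h; rewrite in_cons hi' orbT.
Qed.

Lemma mu_prod (I : eqType) (s : seq I) (B : I -> {set T}) (f : I -> {set T} -> R) :
  uniq s -> (forall i j, i \in s -> j \in s -> i != j -> B i :&: B j = set0) ->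
  (forall i, local (B i) (f i)) ->
  mu (\bigcup_(i <- s) B i) (fun E => \prod_(i <- s) f i E) = \prod_(i <- s) mu (B i) (f i).
Proof.
elim: s => [|i s IH] us hd hl.
  rewrite big_nil (@mu_ext _ _ (fun _ => 1)) ?mu_const ?big_nil // => E _; by rewrite big_nil.
move: us => /= /andP [nis us].
rewrite big_cons (@mu_ext _ _ (fun E => f i E * \prod_(j <- s) f j E)); last first.
  by move=> E _; rewrite big_cons.
rewrite mu_mulI //.
- rewrite big_cons IH // => j j' js j's; apply: hd; by rewrite in_cons ?js ?j's orbT.
- apply: bigcup_seq_disj => j js; apply: hd; rewrite ?mem_head ?in_cons ?js ?orbT //.
  by apply: contraNneq nis => ->.
- move=> E; rewrite big_seq_cond [in RHS]big_seq_cond; apply: eq_bigr => j /andP [js _].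
  rewrite hl [in RHS]hl -setIA; congr (f j (E :&: _)).
  by apply/esym/setIidPr/bigcup_seq_sub.
Qed.

End Mu.

Section Logic.
Variables (n : nat) (a : 'I_n) (S : {set 'I_n}) (E : {set {set 'I_n}}).
Hypothesis aS : a \notin S.
Hypothesis S0 : S != set0.

Definition Tv : {set 'I_n} := ~: (a |: S).
Definition I0b := [forall s in S, ~~ adj E a s].
Definition Ab := [forall v in Tv, adj E a v || [forall s in S, ~~ adj E s v]].
Definition Bb := [forall v in Tv, adj E a v].
Definition Cb := [forall v in Tv, [forall s in S, ~~ adj E s v]].

Lemma in_st y : (y \in st E a) = (y == a) || adj E a y.
Proof. by rewrite /st !inE. Qed.

Lemma in_Tv y : (y \in Tv) = ~~ (y == a) && (y \notin S).
Proof. by rewrite /Tv !inE negb_or. Qed.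

Lemma L1 : (S \subset ~: st E a) = I0b.
Proof.
apply/subsetP/forall_inP => h s sS.
  by move: (h s sS); rewrite in_setC in_st negb_or => /andP [_ ->].
rewrite in_setC in_st negb_or h // andbT.
by apply: contraNneq aS => <-.
Qed.

Lemma L2 : I0b -> (S != ~: st E a) = ~~ Bb.
Proof.
move=> /forall_inP hI; congr negb; apply/eqP/forall_inP.
  move=> hS v; rewrite in_Tv => /andP [va vS]; apply/negPn/negP => nav.
  by move/setP: hS => /(_ v); rewrite in_setC in_st (negbTE vS) (negbTE va) (negbTE nav).
move=> hB; apply/setP => y; rewrite in_setC in_st.
case yS: (y \in S).
  have ya : (y == a) = false by apply/negbTE; apply: contraNneq aS => <-.
  by rewrite ya /= hI.
case ya: (y == a) => //=.
by rewrite hB // in_Tv ya yS.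
Qed.

Lemma L3 : [forall x in S, forall y in ~: st E a :\: S, ~~ adj E x y] = Ab.
Proof.
apply/forall_inP/forall_inP => h.
  move=> v; rewrite in_Tv => /andP [va vS].
  case: (boolP (adj E a v)) => //= nav; apply/forall_inP => s sS.
  apply: (forall_inP (h s sS)).
  by rewrite in_setD in_setC in_st negb_or va nav vS.
move=> s sS; apply/forall_inP => y; rewrite in_setD in_setC in_st negb_or => /andP [yS /andP [ya nay]].
have := h y; rewrite in_Tv ya yS (negbTE nay) /= => /(_ isT) /forall_inP; apply.
exact: sS.
Qed.

Lemma L4 : I0b -> is_sep E setT S = Cb.
Proof.
move=> /forall_inP hI.
rewrite /is_sep subsetT S0 /=.
have -> : (S != setT) = true.
  by apply/negP => /eqP h; move: aS; rewrite h inE.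
rewrite /=; apply/forall_inP/forall_inP => h.
  move=> v; rewrite in_Tv => /andP [va vS]; apply/forall_inP => s sS.
  by move: (h s sS) => /forall_inP; apply; rewrite !inE vS.
move=> s sS; apply/forall_inP => y; rewrite in_setD in_setT andbT => yS.
case ya: (y == a).
  by rewrite (eqP ya) /adj setUC; apply: hI.
have : y \in Tv by rewrite in_Tv ya yS.
by move=> /h /forall_inP; apply.
Qed.

Lemma cond_bool : (star_sep E a S && ~~ is_sep E setT S) = [&& I0b, Ab, ~~ Bb & ~~ Cb].
Proof.
rewrite /star_sep L1; case h: I0b => //=.
rewrite L4 // /is_sep L1 h S0 L2 // L3 /=.
by case: Ab; case: Bb; case: Cb.
Qed.

End Logic.

Section Graph.
Variables (R : comNzRingType) (p : R) (n : nat) (a : 'I_n) (S : {set 'I_n}).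
Hypothesis aS : a \notin S.
Hypothesis S0 : S != set0.

Definition xa v (E : {set {set 'I_n}}) : R := ([set a; v] \in E)%:R.
Definition yv v (E : {set {set 'I_n}}) : R := \prod_(s <- enum S) ([set s; v] \notin E)%:R.
Definition I0 (E : {set {set 'I_n}}) : R := \prod_(s <- enum S) ([set a; s] \notin E)%:R.
Definition Kf (E : {set {set 'I_n}}) : R :=
  \prod_(v <- enum (Tv a S)) (xa v E + yv v E - xa v E * yv v E)
  - \prod_(v <- enum (Tv a S)) xa v E - \prod_(v <- enum (Tv a S)) yv v E
  + \prod_(v <- enum (Tv a S)) (xa v E * yv v E).

Lemma prod_bool (I : eqType) (s : seq I) (b : I -> bool) :
  \prod_(i <- s) ((b i)%:R : R) = (all b s)%:R.
Proof.
elim: s => [|i s IH]; first by rewrite big_nil.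
by rewrite big_cons IH /=; case: (b i); rewrite ?mul1r ?mul0r.
Qed.

Lemma all_enum (I : finType) (A : {set I}) (b : I -> bool) :
  all b (enum A) = [forall i in A, b i].
Proof.
apply/allP/forall_inP => h i; first by move=> iA; apply: h; rewrite mem_enum.
by rewrite mem_enum; apply: h.
Qed.

Lemma cond_R E :
  ((star_sep E a S && ~~ is_sep E setT S)%:R : R) = I0 E * Kf E.
Proof.
rewrite cond_bool //.
have hy : forall v, yv v E = [forall s in S, ~~ adj E s v]%:R.
  by move=> v; rewrite /yv prod_bool all_enum.
have hI : I0 E = (I0b a S E)%:R by rewrite /I0 prod_bool all_enum.
rewrite /Kf hI.
rewrite (eq_bigr (fun v => (adj E a v || [forall s in S, ~~ adj E s v])%:R)); last first.
  by move=> v _; rewrite hy /xa /adj; case: (_ \in E); case: [forall _ in _, _] => /=;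
     rewrite ?mulr1 ?mulr0 ?mul0r ?addrK ?subr0 ?addr0 ?add0r.
rewrite [X in _ - X - _ + _](eq_bigr (fun v => (adj E a v)%:R)) //.
rewrite [X in _ - _ - X + _](eq_bigr (fun v => [forall s in S, ~~ adj E s v]%:R)); last first.
  by move=> v _; rewrite hy.
rewrite [X in _ - _ - _ + X](eq_bigr (fun v => (adj E a v && [forall s in S, ~~ adj E s v])%:R)); last first.
  by move=> v _; rewrite hy /xa /adj; case: (_ \in E); case: [forall _ in _, _] => /=;
     rewrite ?mulr1 ?mulr0 ?mul0r ?mul1r.
rewrite !prod_bool !all_enum -/(Ab a S E) -/(Bb a S E) -/(Cb a S E).
have -> : [forall i in Tv a S, adj E a i && [forall s in S, ~~ adj E s i]] = Bb a S E && Cb a S E.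
  apply/forall_inP/andP => [h|[/forall_inP h1 /forall_inP h2] v vT].
    by split; apply/forall_inP => v /h /andP [].
  by rewrite h1 // h2.
have BA : Bb a S E ==> Ab a S E.
  by apply/implyP => /forall_inP h; apply/forall_inP => v /h ->.
have CA : Cb a S E ==> Ab a S E.
  by apply/implyP => /forall_inP h; apply/forall_inP => v /h ->; rewrite orbT.
move: BA CA; case: (I0b a S E); case: (Ab a S E); case: (Bb a S E); case: (Cb a S E) => //= _ _;
  rewrite ?mulr0n ?mulr1n; ring.
Qed.


Lemma e2_mem (x y z w : 'I_n) : [set x; y] = [set z; w] -> (x == z) || (x == w).
Proof. by move/setP => /(_ x); rewrite !inE eqxx /= => <-. Qed.

Lemma e2_mem2 (x y z w : 'I_n) : [set x; y] = [set z; w] -> (y == z) || (y == w).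
Proof. by rewrite [[set x; y]]setUC => /e2_mem. Qed.

Lemma in_bigcup_seq (I : eqType) (s : seq I) (F : I -> {set {set 'I_n}}) e :
  (e \in \bigcup_(i <- s) F i) = has (fun i => e \in F i) s.
Proof.
elim: s => [|i s IH]; first by rewrite big_nil inE.
by rewrite big_cons in_setU IH.
Qed.

Lemma local_in (B : {set {set 'I_n}}) e : e \in B -> local B (fun E => ((e \in E)%:R : R)).
Proof. by move=> eB E; rewrite in_setI eB andbT. Qed.

Lemma local_notin (B : {set {set 'I_n}}) e : e \in B -> local B (fun E => ((e \notin E)%:R : R)).
Proof. by move=> eB E; rewrite in_setI eB andbT. Qed.

Lemma local_mul (B : {set {set 'I_n}}) (f g : {set {set 'I_n}} -> R) :
  local B f -> local B g -> local B (fun E => f E * g E).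
Proof. by move=> hf hg E; rewrite hf hg. Qed.

Lemma local_add (B : {set {set 'I_n}}) (f g : {set {set 'I_n}} -> R) :
  local B f -> local B g -> local B (fun E => f E + g E).
Proof. by move=> hf hg E; rewrite hf hg. Qed.

Lemma local_sub (B : {set {set 'I_n}}) (f g : {set {set 'I_n}} -> R) :
  local B f -> local B g -> local B (fun E => f E - g E).
Proof. by move=> hf hg E; rewrite hf hg. Qed.

Lemma local_prod (I : eqType) (s : seq I) (B : {set {set 'I_n}}) (f : I -> {set {set 'I_n}} -> R) :
  (forall i, i \in s -> local B (f i)) -> local B (fun E => \prod_(i <- s) f i E).
Proof.
move=> h E; rewrite big_seq_cond [in RHS]big_seq_cond; apply: eq_bigr => i /andP [hi _].
exact: h.
Qed.

Lemma local_mono (B D : {set {set 'I_n}}) (f : {set {set 'I_n}} -> R) :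
  B \subset D -> local B f -> local D f.
Proof. by move=> hBD hf E; rewrite hf [in RHS]hf -setIA (setIidPr hBD). Qed.

Lemma mu_in1 (e : {set 'I_n}) : mu p [set e] (fun E => ((e \in E)%:R : R)) = p.
Proof. by rewrite mu_set1 set11 inE mulr1 mulr0 addr0. Qed.

Lemma mu_notin1 (e : {set 'I_n}) : mu p [set e] (fun E => ((e \notin E)%:R : R)) = 1 - p.
Proof. by rewrite mu_set1 set11 inE mulr0 mulr1 add0r. Qed.

Lemma disjP (A B : {set {set 'I_n}}) : (forall e, e \in A -> e \in B -> False) -> A :&: B = set0.
Proof.
move=> h; apply/setP => e; rewrite !inE; apply/negbTE/negP => /andP [hA hB].
exact: h hA hB.
Qed.

Lemma prod_const_enum (c : R) : \prod_(s <- enum S) c = c ^+ #|S|.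
Proof. by rewrite big_enum prodr_const. Qed.

Lemma prod_const_enumT (c : R) : \prod_(v <- enum (Tv a S)) c = c ^+ #|Tv a S|.
Proof. by rewrite big_enum prodr_const. Qed.

Definition Cv v := \bigcup_(s <- enum S) [set [set s; v]].
Definition Bv v := [set [set a; v]] :|: Cv v.
Definition B0 := \bigcup_(s <- enum S) [set [set a; s]].
Definition BT := \bigcup_(v <- enum (Tv a S)) Bv v.

Lemma aneq s : s \in S -> (s == a) = false.
Proof. by move=> sS; apply/negbTE; apply: contraNneq aS => <-. Qed.

Lemma mu_I0 : mu p B0 I0 = (1 - p) ^+ #|S|.
Proof.
rewrite /B0 /I0 mu_prod ?enum_uniq //.
- by rewrite (eq_bigr (fun _ => 1 - p)) ?prod_const_enum // => s _; rewrite mu_notin1.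
- move=> s s' sS s'S ss'; apply: disjP => e; rewrite !inE => /eqP -> /eqP /e2_mem2.
  by rewrite mem_enum in sS; rewrite aneq // (negbTE ss').
- by move=> s; apply: local_notin; rewrite set11.
Qed.

Lemma mu_yv v : v \notin S -> mu p (Cv v) (yv v) = (1 - p) ^+ #|S|.
Proof.
move=> vS.
rewrite /Cv /yv mu_prod ?enum_uniq //.
- by rewrite (eq_bigr (fun _ => 1 - p)) ?prod_const_enum // => s _; rewrite mu_notin1.
- move=> s s' sS s'S ss'; apply: disjP => e; rewrite !inE => /eqP -> /eqP /e2_mem.
  rewrite (negbTE ss') /=; apply/negP; apply: contraNneq vS => <-.
  by rewrite -mem_enum.
- by move=> s; apply: local_notin; rewrite set11.
Qed.

Lemma local_yv v : local (Cv v) (yv v).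
Proof.
apply: local_prod => s sS; apply: local_notin.
by rewrite /Cv in_bigcup_seq; apply/hasP; exists s => //; rewrite inE.
Qed.

Lemma disj_av_Cv v : v \in Tv a S -> [set [set a; v]] :&: Cv v = set0.
Proof.
rewrite in_Tv => /andP [va vS].
apply: disjP => e; rewrite inE => /eqP ->; rewrite /Cv in_bigcup_seq => /hasP [s sS].
rewrite mem_enum in sS.
by rewrite inE => /eqP /e2_mem; rewrite eq_sym aneq // eq_sym (negbTE va).
Qed.


Lemma av_Bv v : [set a; v] \in Bv v.
Proof. by rewrite /Bv in_setU set11. Qed.

Lemma local_xa v : local (Bv v) (xa v).
Proof. exact: local_in (av_Bv v). Qed.

Lemma local_yvB v : local (Bv v) (yv v).
Proof. exact: local_mono (subsetUr _ _) (local_yv v). Qed.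

Lemma mu_Bv_xy v : v \in Tv a S ->
  mu p (Bv v) (fun E => xa v E * yv v E) = p * (1 - p) ^+ #|S|.
Proof.
move=> vT; have := vT; rewrite in_Tv => /andP [va vS].
rewrite /Bv mu_mulI ?disj_av_Cv ?mu_yv //.
- by rewrite /xa mu_in1.
- by apply: local_in; rewrite set11.
- exact: local_yv.
Qed.

Lemma mu_Bv_x v : v \in Tv a S -> mu p (Bv v) (xa v) = p.
Proof.
move=> vT.
rewrite (@mu_ext _ _ _ _ _ (fun E => xa v E * 1)); last by move=> E _; rewrite mulr1.
rewrite /Bv mu_mulI ?disj_av_Cv ?mu_const ?mulr1 //.
- by rewrite /xa mu_in1.
- by apply: local_in; rewrite set11.
Qed.

Lemma mu_Bv_y v : v \in Tv a S -> mu p (Bv v) (yv v) = (1 - p) ^+ #|S|.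
Proof.
move=> vT; have := vT; rewrite in_Tv => /andP [va vS].
rewrite (@mu_ext _ _ _ _ _ (fun E => 1 * yv v E)); last by move=> E _; rewrite mul1r.
rewrite /Bv mu_mulI ?disj_av_Cv ?mu_const ?mul1r ?mu_yv //.
exact: local_yv.
Qed.

Lemma disj_Bv v w : v \in Tv a S -> w \in Tv a S -> v != w -> Bv v :&: Bv w = set0.
Proof.
rewrite !in_Tv => /andP [va vS] /andP [wa wS] vw.
apply: disjP => e; rewrite /Bv /Cv !in_setU !in_bigcup_seq.
move=> /orP [|/hasP [s sS]]; rewrite inE => /eqP ->;
  move=> /orP [|/hasP [s' s'S]]; rewrite inE => /eqP.
- by move/e2_mem2; rewrite (negbTE va) (negbTE vw).
- rewrite mem_enum in s'S.
  by move/e2_mem; rewrite eq_sym aneq // eq_sym (negbTE wa).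
- rewrite mem_enum in sS.
  by move/esym/e2_mem; rewrite eq_sym aneq // eq_sym (negbTE va).
- move/e2_mem2; rewrite (negbTE vw) orbF => /eqP vs'.
  by rewrite mem_enum -vs' in s'S; rewrite s'S in vS.
Qed.

Lemma disj_B0_BT : B0 :&: BT = set0.
Proof.
apply: disjP => e; rewrite /B0 /BT !in_bigcup_seq => /hasP [s sS]; rewrite inE => /eqP ->.
move=> /hasP [v vT]; rewrite mem_enum in sS; rewrite mem_enum in_Tv in vT.
move: vT => /andP [va vS].
rewrite /Bv /Cv in_setU in_bigcup_seq inE => /orP [/eqP|/hasP [s' s'S]].
  move/e2_mem2; rewrite aneq //= => /eqP sv.
  by rewrite -sv sS in vS.
rewrite mem_enum in s'S; rewrite inE => /eqP /e2_mem.
by rewrite eq_sym aneq // eq_sym (negbTE va).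
Qed.


Lemma mu_prodT (f : 'I_n -> {set {set 'I_n}} -> R) c :
  (forall v, local (Bv v) (f v)) -> (forall v, v \in Tv a S -> mu p (Bv v) (f v) = c) ->
  mu p BT (fun E => \prod_(v <- enum (Tv a S)) f v E) = c ^+ #|Tv a S|.
Proof.
move=> hl hc; rewrite /BT mu_prod ?enum_uniq //.
- rewrite -prod_const_enumT big_seq_cond [in RHS]big_seq_cond; apply: eq_bigr => v /andP [vT _].
  by rewrite hc // -mem_enum.
- by move=> v w; rewrite !mem_enum; apply: disj_Bv.
Qed.

Lemma mu_BT : mu p BT Kf =
  (p + (1 - p) ^+ #|S| - p * (1 - p) ^+ #|S|) ^+ #|Tv a S| - p ^+ #|Tv a S|
  - ((1 - p) ^+ #|S|) ^+ #|Tv a S| + (p * (1 - p) ^+ #|S|) ^+ #|Tv a S|.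
Proof.
rewrite /Kf muD !muB.
rewrite (mu_prodT (c := p + (1 - p) ^+ #|S| - p * (1 - p) ^+ #|S|)); first last.
  by move=> v vT; rewrite muB muD mu_Bv_x ?mu_Bv_y ?mu_Bv_xy.
  by move=> v; apply: local_sub; [apply: local_add|apply: local_mul];
    [exact: local_xa|exact: local_yvB|exact: local_xa|exact: local_yvB].
rewrite (mu_prodT (c := p)); first last; [exact: mu_Bv_x|exact: local_xa|].
rewrite (mu_prodT (c := (1 - p) ^+ #|S|)); first last; [exact: mu_Bv_y|exact: local_yvB|].
rewrite (mu_prodT (c := p * (1 - p) ^+ #|S|)) //; last exact: mu_Bv_xy.
by move=> v; apply: local_mul; [exact: local_xa|exact: local_yvB].
Qed.


Lemma local_I0 : local B0 I0.
Proof.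
apply: local_prod => s sS; apply: local_notin.
by rewrite /B0 in_bigcup_seq; apply/hasP; exists s => //; rewrite inE.
Qed.

Lemma local_Kf : local BT Kf.
Proof.
have hm : forall (f : 'I_n -> {set {set 'I_n}} -> R), (forall v, local (Bv v) (f v)) ->
    local BT (fun E => \prod_(v <- enum (Tv a S)) f v E).
  move=> f hf; apply: local_prod => v vT; apply: local_mono (hf v).
  exact: bigcup_seq_sub.
apply: local_add; first apply: local_sub; first apply: local_sub; apply: hm => v.
- by apply: local_sub; [apply: local_add|apply: local_mul];
    [exact: local_xa|exact: local_yvB|exact: local_xa|exact: local_yvB].
- exact: local_xa.
- exact: local_yvB.
- by apply: local_mul; [exact: local_xa|exact: local_yvB].
Qed.

Lemma pairs2 (x y : 'I_n) : x != y -> [set x; y] \in pairs n.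
Proof. by move=> xy; rewrite /pairs inE cards2 xy. Qed.

Lemma mu_total : mu p (pairs n) (fun E => ((star_sep E a S && ~~ is_sep E setT S)%:R : R)) =
  (1 - p) ^+ #|S| *
  ((p + (1 - p) ^+ #|S| - p * (1 - p) ^+ #|S|) ^+ #|Tv a S| - p ^+ #|Tv a S|
  - ((1 - p) ^+ #|S|) ^+ #|Tv a S| + (p * (1 - p) ^+ #|S|) ^+ #|Tv a S|).
Proof.
rewrite (@mu_ext _ _ _ _ _ (fun E => I0 E * Kf E)); last by move=> E _; rewrite cond_R.
rewrite (@mu_restrict _ _ _ _ (B0 :|: BT)).
- by rewrite mu_mulI ?disj_B0_BT ?mu_I0 ?mu_BT //; [exact: local_I0|exact: local_Kf].
- apply/subsetP => e; rewrite in_setU !in_bigcup_seq => /orP [/hasP [s sS]|/hasP [v vT]].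
    rewrite inE => /eqP ->; apply: pairs2; rewrite mem_enum in sS.
    by rewrite eq_sym aneq.
  rewrite mem_enum in_Tv in vT; move: vT => /andP [va vS].
  rewrite /Bv /Cv in_setU in_bigcup_seq inE => /orP [/eqP ->|/hasP [s sS]].
    by apply: pairs2; rewrite eq_sym.
  rewrite inE => /eqP ->; apply: pairs2; rewrite mem_enum in sS.
  by apply: contraNneq vS => <-.
- apply: local_mul; [apply: local_mono local_I0|apply: local_mono local_Kf].
  + exact: subsetUl.
  + exact: subsetUr.
Qed.

End Graph.

Lemma mu_sum (R : comNzRingType) (T I : finType) (p : R) (X : {set T}) (F : I -> {set T} -> R) :
  mu p X (fun E => \sum_i F i E) = \sum_i mu p X (F i).
Proof.
rewrite /mu exchange_big; apply: eq_bigr => E _; by rewrite mulr_sumr.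
Qed.

Lemma expect_mu (R : comNzRingType) n (p : R) (X : {set {set 'I_n}} -> nat) :
  gnp_expect p X = mu p (pairs n) (fun E => (X E)%:R).
Proof.
apply: eq_bigr => E hE; rewrite /gnp_weight cardsD (setIidPr hE) //.
Qed.

Lemma count_aS n k :
  (\sum_(aS : 'I_n * {set 'I_n}) ((aS.1 \notin aS.2) && (#|aS.2| == k)) = n * 'C(n.-1, k))%N.
Proof.
rewrite -(pair_big xpredT xpredT (fun (a : 'I_n) (S : {set 'I_n}) => ((a \notin S) && (#|S| == k) : nat))) /=.
rewrite (eq_bigr (fun _ => 'C(n.-1, k))); first by rewrite sum_nat_const card_ord.
move=> a _.
rewrite -big_mkcond /= sum1_card.
rewrite (eq_card (B := [set S : {set 'I_n} | S \subset [set~ a] & #|S| == k])).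
  by rewrite cards_draws cardsC1 card_ord.
move=> S; rewrite !inE; congr (_ && _).
apply/idP/subsetP => [aS x xS|h]; first by rewrite !inE; apply: contraNneq aS => <-.
by apply/negP => /h; rewrite !inE eqxx.
Qed.

Unset Implicit Arguments.

Theorem lemma3p2 (R : realFieldType) (n k : nat) (p : R)
    (hp0 : 0 <= p) (hp1 : p <= 1) (hk : (0 < k)%N) :
  gnp_expect p (U k (n:=n)) =
  n%:R * ('C(n.-1, k))%:R * (1 - p) ^+ k *
    ((p + (1 - p) ^+ k.+1) ^+ (n - k.+1)
     + (1 - p ^+ (n - k.+1)) * (1 - (1 - p) ^+ (k * (n - k.+1))) - 1).
Proof.
set m := (n - k.+1)%N.
set V : R := (1 - p) ^+ k *
  ((p + (1 - p) ^+ k - p * (1 - p) ^+ k) ^+ m - p ^+ m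
  - ((1 - p) ^+ k) ^+ m + (p * (1 - p) ^+ k) ^+ m).
rewrite expect_mu.
rewrite (@mu_ext _ _ _ _ _ (fun E => \sum_(aS : 'I_n * {set 'I_n})
   (([&& star_sep E aS.1 aS.2, #|aS.2| == k & ~~ is_sep E setT aS.2])%:R : R))); last first.
  move=> E _; rewrite /U -sum1_card big_mkcond natr_sum; apply: eq_bigr => aS _.
  by rewrite inE; case: (_ && _).
rewrite mu_sum.
rewrite (eq_bigr (fun aS : 'I_n * {set 'I_n} =>
   (((aS.1 \notin aS.2) && (#|aS.2| == k) : nat)%:R : R) * V)); last first.
  move=> [a S] _ /=.
  case: (boolP (a \in S)) => aS /=.
    rewrite mul0r (@mu_ext _ _ _ _ _ (fun _ => 0)) ?mu_const // => E _.
    suff -> : star_sep E a S = false by [].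
    apply/negbTE/negP => /andP [/subsetP /(_ a aS)]; by rewrite !inE eqxx.
  case: (eqVneq #|S| k) => hS /=; last first.
    rewrite mul0r (@mu_ext _ _ _ _ _ (fun _ => 0)) ?mu_const // => E _.
    by rewrite andbF.
  rewrite mul1r.
  have S0 : S != set0 by apply/eqP => h; rewrite h cards0 in hS; rewrite -hS in hk.
  rewrite mu_total // hS.
  have -> : #|Tv a S| = m by rewrite /Tv cardsCs setCK cardsU1 aS hS card_ord.
  by [].
rewrite -mulr_suml -natr_sum count_aS natrM /V.
have -> : p + (1 - p) ^+ k - p * (1 - p) ^+ k = p + (1 - p) ^+ k.+1 by rewrite exprSr; ring.
rewrite exprM exprMn.
move: ((p + (1 - p) ^+ k.+1) ^+ m) (p ^+ m) ((1 - p) ^+ k ^+ m) ((1 - p) ^+ k) => A B C D.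
ring.
Qed.
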